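(* Let $n\ge 0$, let $T$ be a triangulation of a regular polygon with $n+3$ vertices, let $\alpha,\alpha'$ be positive roots and write $S=\operatorname{Supp}\alpha$, $S'=\operatorname{Supp}\alpha'$. The following are equivalent: (A) there exists $i\in S\cap S'$ such that, denoting by $v_1,v_2$ the endpoints of $-\alpha_i$ and by $u_1,u_2$ (resp. $u_1',u_2'$) the endpoints of $\alpha$ (resp. $\alpha'$), and ordering the vertices counterclockwise starting at $v_1$ (for a suitable choice of labelling of the endpoints), one has $v_1<u_1\le u_1'<v_2<u_2\le u_2'$; (B) $S\cap S'\neq\emptyset$, there is no arrow in ${Q}_T$ from $S\setminus S'$ to $S\cap S'$, and there is no arrow in ${Q}_T$ from $S\cap S'$ to $S'\setminus S$.
   Context: Diagonals of the polygon are called roots; those in $T$ are negative roots, indexed by a set $I$ (the one indexed by $i$ written $-\alpha_i$), and the others positive roots. $\operatorname{Supp}\alpha$ is the set of $i\in I$ with $-\alpha_i$ crossing $\alpha$. If $-\alpha_i,-\alpha_j$ bound a common triangle of $T$ with common vertex $x$, set $-\alpha_i<-\alpha_j$ if the minimal-angle rotation about $x$ sending the line through $-\alpha_i$ to that through $-\alpha_j$ is counterclockwise. ${Q}_T$ has vertex set $I$ and an arrow $j\to i$ whenever $-\alpha_i,-\alpha_j$ bound a common triangle and $-\alpha_i<-\alpha_j$. *)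

(* Defs.v *)
From mathcomp Require Import all_boot.
Set Implicit Arguments. Unset Strict Implicit. Unset Printing Implicit Defensive.

Section Polygon.
Variable N : nat.
(* Vertices of the polygon are 'I_N, labelled 0,1,...,N-1 counterclockwise. *)

Definition cyc (v x : 'I_N) : nat := (x + N - v) %% N.

Definition adjacent (a b : 'I_N) : Prop := cyc a b = 1 \/ cyc b a = 1.

Definition is_diag (d : {set 'I_N}) : Prop :=
  exists a b : 'I_N, a != b /\ ~ adjacent a b /\ d = [set a; b].

Definition cross (d e : {set 'I_N}) : bool :=
  [exists a : 'I_N, exists c : 'I_N, exists b : 'I_N, exists f : 'I_N,
    [&& a < c, c < b, b < f &
      ((d == [set a; b]) && (e == [set c; f])) ||
      ((d == [set c; f]) && (e == [set a; b]))]].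

Definition triangulation (T : {set {set 'I_N}}) : Prop :=
  (forall d, d \in T -> is_diag d) /\
  (forall d e, d \in T -> e \in T -> ~ cross d e) /\
  (forall d, is_diag d -> d \notin T -> exists2 e, e \in T & cross d e).

(* positive root: a diagonal not in T (negative roots are the elements of T;
   the index set I is taken to be T itself) *)
Definition positive_root (T : {set {set 'I_N}}) (al : {set 'I_N}) : Prop :=
  is_diag al /\ al \notin T.

Definition Supp (T : {set {set 'I_N}}) (al : {set 'I_N}) : {set {set 'I_N}} :=
  [set i in T | cross i al].

Definition side_or_in (T : {set {set 'I_N}}) (a b : 'I_N) : Prop :=
  adjacent a b \/ [set a; b] \in T.

Definition triangle_of (T : {set {set 'I_N}}) (x y z : 'I_N) : Prop :=
  [/\ x != y, y != z & x != z] /\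
  [/\ side_or_in T x y, side_or_in T y z & side_or_in T x z].

(* arrow j -> i in Q_T: -alpha_i, -alpha_j bound a common triangle of T with
   common vertex x, and the rotation about x (through the interior angle of
   the triangle) from -alpha_i to -alpha_j is counterclockwise, i.e. the
   other endpoint of -alpha_i comes before that of -alpha_j counterclockwise
   from x. *)
Definition arrow (T : {set {set 'I_N}}) (j i : {set 'I_N}) : Prop :=
  i \in T /\ j \in T /\
  exists x y z : 'I_N, triangle_of T x y z /\
    i = [set x; y] /\ j = [set x; z] /\ cyc x y < cyc x z.

End Polygon.

(* Main.v *)
Require Import Defs.
From mathcomp Require Import all_boot zify.
Set Implicit Arguments. Unset Strict Implicit. Unset Printing Implicit Defensive.
Section S.
Variable N : nat.
Lemma cycE (o v : 'I_N) : cyc o v = if o <= v then v - o else v + N - o.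
Proof. rewrite /cyc; have := ltn_ord o; have := ltn_ord v; case: (leqP o v) => h1 h2 h3.
- have -> : v + N - o = (v - o) + N by lia.
  rewrite modnDr modn_small //; lia.
- rewrite modn_small //; lia.
Qed.
Lemma set2eq (a b c d : 'I_N) : [set a;b] = [set c;d] <-> (a = c /\ b = d) \/ (a = d /\ b = c).
Proof.
split; last by case=> [[-> ->]|[-> ->]] //; rewrite setUC.
move/setP=> h.
have ha : (a == c) || (a == d) by rewrite -[_ || _]orbF -!in_set1 -in_setU -h !inE eqxx.
have hb : (b == c) || (b == d) by rewrite -[_ || _]orbF -!in_set1 -in_setU -h !inE eqxx orbT.
have hc : (c == a) || (c == b) by rewrite -[_ || _]orbF -!in_set1 -in_setU h !inE eqxx.
have hd : (d == a) || (d == b) by rewrite -[_ || _]orbF -!in_set1 -in_setU h !inE eqxx orbT.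
case/orP: ha => /eqP E1; subst.
- case/orP: hb => /eqP E2; subst; auto.
  by case/orP: hd => /eqP ->; auto.
- case/orP: hb => /eqP E2; subst; auto.
  by case/orP: hc => /eqP ->; auto.
Qed.

Definition ileave (A B C F : nat) : Prop :=
  (A < C < B /\ B < F) \/ (A < F < B /\ B < C) \/ (B < C < A /\ A < F) \/ (B < F < A /\ A < C) \/
  (C < A < F /\ F < B) \/ (C < B < F /\ F < A) \/ (F < A < C /\ C < B) \/ (F < B < C /\ C < A).

Lemma crossI (a0 c0 b0 f0 : 'I_N) d e : a0 < c0 -> c0 < b0 -> b0 < f0 ->
  (d = [set a0;b0] /\ e = [set c0;f0]) \/ (d = [set c0; f0] /\ e = [set a0;b0]) -> cross d e.
Proof.
move=> h1 h2 h3 H; apply/existsP; exists a0; apply/existsP; exists c0;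
apply/existsP; exists b0; apply/existsP; exists f0; rewrite h1 h2 h3 /=.
by case: H => [[-> ->]|[-> ->]]; rewrite !eqxx ?orbT.
Qed.

Lemma crossE0 (a b c f : 'I_N) : cross [set a;b] [set c;f] <-> ileave a b c f.
Proof.
split.
- move=> /existsP[a0 /existsP[c0 /existsP[b0 /existsP[f0 /and4P[h1 h2 h3 H]]]]].
  rewrite /ileave.
  case/orP: H => /andP[/eqP /set2eq E1 /eqP /set2eq E2];
  case: E1 => [[??]|[??]]; case: E2 => [[??]|[??]]; subst; lia.
- rewrite /ileave => H.
  have sC := (@setUC _ [set a] [set b]).
  have sC' := (@setUC _ [set c] [set f]).
  case: H => [[/andP[h1 h2] h3]|[[/andP[h1 h2] h3]|[[/andP[h1 h2] h3]|[[/andP[h1 h2] h3]|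
     [[/andP[h1 h2] h3]|[[/andP[h1 h2] h3]|[[/andP[h1 h2] h3]|[/andP[h1 h2] h3]]]]]]]].
  + by apply: (crossI h1 h2 h3); left.
  + by apply: (crossI h1 h2 h3); left; rewrite sC'.
  + by apply: (crossI h1 h2 h3); left; rewrite sC.
  + by apply: (crossI h1 h2 h3); left; rewrite sC sC'.
  + by apply: (crossI h1 h2 h3); right.
  + by apply: (crossI h1 h2 h3); right; rewrite sC.
  + by apply: (crossI h1 h2 h3); right; rewrite sC'.
  + by apply: (crossI h1 h2 h3); right; rewrite sC sC'.
Qed.

Lemma cyc_lt (o v : 'I_N) : cyc o v < N.
Proof. rewrite cycE; have := ltn_ord o; have := ltn_ord v; case: (leqP o v); lia. Qed.

Lemma cyc0 (o : 'I_N) : cyc o o = 0.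
Proof. by rewrite cycE leqnn subnn. Qed.

Lemma cycB (o x y : 'I_N) : cyc x y = if cyc o x <= cyc o y then cyc o y - cyc o x else cyc o y + N - cyc o x.
Proof.
rewrite !cycE; have := ltn_ord o; have := ltn_ord x; have := ltn_ord y.
case: (leqP o x); case: (leqP o y); case: (leqP x y); case: ifP; lia.
Qed.

Lemma cyc_inj (o u v : 'I_N) : cyc o u = cyc o v -> u = v.
Proof.
rewrite !cycE => h; apply/val_inj; move: h; have := ltn_ord o; have := ltn_ord u; have := ltn_ord v.
case: (leqP o u); case: (leqP o v); simpl; lia.
Qed.

Definition btw (A B X : nat) : Prop := (A < X < B) \/ (B < X < A).

Lemma ileaveE A B C F : ileave A B C F <-> C <> A /\ C <> B /\ F <> A /\ F <> B /\ (btw A B C <-> ~ btw A B F).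
Proof. rewrite /ileave /btw; lia. Qed.

Lemma btw_rot (o a b x : 'I_N) : x <> a -> x <> b -> 
  (btw (cyc o a) (cyc o b) (cyc o x) <-> (btw a b x <-> (o <= a <-> o <= b))).
Proof.
move=> xa xb; have xa' : nat_of_ord x <> nat_of_ord a by move=> /val_inj.
have xb' : nat_of_ord x <> nat_of_ord b by move=> /val_inj.
rewrite !cycE /btw; have := ltn_ord o; have := ltn_ord a; have := ltn_ord b; have := ltn_ord x.
case: (leqP o a); case: (leqP o b); case: (leqP o x); lia.
Qed.

Lemma cross_o (o a b c f : 'I_N) : cross [set a;b] [set c;f] <-> ileave (cyc o a) (cyc o b) (cyc o c) (cyc o f).
Proof.
rewrite crossE0 !ileaveE.
have inj := @cyc_inj o.
have E : forall u v : 'I_N, (val u <> val v <-> u <> v) by move=> u v; split=> H E; apply: H; [rewrite E|apply/val_inj].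
have E' : forall u v : 'I_N, (cyc o u <> cyc o v <-> u <> v) by move=> u v; split=> H E1; apply: H; [rewrite E1|apply: inj].
rewrite !E !E'.
case: (eqVneq c a) => [->|ca]; first by split=> H; exfalso; case: H => H1 [H2 [H3 [H4 _]]]; auto.
case: (eqVneq c b) => [->|cb]; first by split=> H; exfalso; case: H => H1 [H2 [H3 [H4 _]]]; auto.
case: (eqVneq f a) => [->|fa]; first by split=> H; exfalso; case: H => H1 [H2 [H3 [H4 _]]]; auto.
case: (eqVneq f b) => [->|fb]; first by split=> H; exfalso; case: H => H1 [H2 [H3 [H4 _]]]; auto.
have ca' : c <> a by apply/eqP.
have cb' : c <> b by apply/eqP.
have fa' : f <> a by apply/eqP.
have fb' : f <> b by apply/eqP.
have h1 := btw_rot o ca' cb'.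
have h2 := btw_rot o fa' fb'.
have [d1|d1] : btw a b c \/ ~ btw a b c by rewrite /btw; lia.
all: have [d2|d2] : btw a b f \/ ~ btw a b f by rewrite /btw; lia.
all: move: h1 h2; case: (o <= a); case: (o <= b); have T1 : is_true true := erefl; have F1 : ~ is_true false by []; tauto.
Qed.

Lemma pos_surj (o : 'I_N) k : k < N -> exists v : 'I_N, cyc o v = k.
Proof.
move=> hk; have hN : 0 < N by lia.
exists (Ordinal (ltn_pmod (o + k) hN)); rewrite cycE /=.
have := ltn_ord o; case: (ltnP (o + k) N) => h1 h2.
- rewrite modn_small // leq_addr; lia.
- have -> : o + k = (o + k - N) + N by lia.
  rewrite modnDr modn_small; last lia.
  case: ifP; lia.
Qed.

Lemma cross_sym (a b c f : 'I_N) : cross [set a;b] [set c;f] <-> cross [set c;f] [set a;b].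
Proof. rewrite !crossE0 /ileave; lia. Qed.

Lemma adj_sym (a b : 'I_N) : adjacent a b <-> adjacent b a.
Proof. rewrite /adjacent; tauto. Qed.

Lemma adj_ncross (a b c f : 'I_N) : adjacent a b -> ~ cross [set a;b] [set c;f].
Proof.
rewrite (cross_o a) cyc0 /adjacent (cycB a b a) cyc0 /ileave.
have := cyc_lt a b; have := cyc_lt a c; have := cyc_lt a f.
case: ifP; lia.
Qed.

Lemma cyc_eq0 (o v : 'I_N) : cyc o v = 0 -> v = o.
Proof. by rewrite -(cyc0 o); apply: cyc_inj. Qed.

Definition sob (T : {set {set 'I_N}}) (a b : 'I_N) : bool :=
  [|| cyc a b == 1, cyc b a == 1 | [set a;b] \in T].

Lemma sobP T (a b : 'I_N) : side_or_in T a b <-> sob T a b.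
Proof.
rewrite /side_or_in /adjacent /sob; split.
- by case=> [[/eqP->|/eqP->]|->]; rewrite ?orbT.
- by case/or3P=> [/eqP|/eqP|]; auto.
Qed.

Lemma diag_of T d : triangulation T -> d \in T -> exists a b : 'I_N, [/\ a != b, ~ adjacent a b & d = [set a;b]].
Proof. by case=> H _ /H [a [b [? [? ?]]]]; exists a, b. Qed.

Lemma ncrossT T (a b c f : 'I_N) : triangulation T -> [set a;b] \in T -> [set c;f] \in T -> ~ cross [set a;b] [set c;f].
Proof. by case=> _ [H _]; apply: H. Qed.

Lemma ileave0 B C F : ileave 0 B C F <-> (0 < C < B /\ B < F) \/ (0 < F < B /\ B < C).
Proof. rewrite /ileave; lia. Qed.
Lemma ileave_sym A B C F : ileave A B C F <-> ileave C F A B.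
Proof. rewrite /ileave; lia. Qed.
Definition cord (A B C : nat) : Prop := (A < B < C) \/ (B < C < A) \/ (C < A < B).

Lemma cord_raw (o a b c : 'I_N) : cord (cyc o a) (cyc o b) (cyc o c) <-> cord a b c.
Proof.
rewrite !cycE /cord; have := ltn_ord o; have := ltn_ord a; have := ltn_ord b; have := ltn_ord c.
case: (leqP o a); case: (leqP o b); case: (leqP o c); lia.
Qed.

Lemma cord_rot (o o' a b c : 'I_N) : cord (cyc o a) (cyc o b) (cyc o c) <-> cord (cyc o' a) (cyc o' b) (cyc o' c).
Proof. by rewrite !cord_raw. Qed.

Lemma eq_rot (o o' a b : 'I_N) : cyc o a = cyc o b -> cyc o' a = cyc o' b.
Proof. by move/cyc_inj ->. Qed.
End S.

Section S2.
Variable N : nat.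
Lemma ar1 W V p q : 0 < W -> W < V -> ileave W V p q -> ~((0<p<V /\ V<q) \/ (0<q<V /\ V<p)) ->
  ~((0<p<W /\ W<q) \/ (0<q<W /\ W<p)) -> (p = 0 /\ W < q < V) \/ (q = 0 /\ W < p < V).
Proof. rewrite /ileave; lia. Qed.

Lemma tri_ex T (v1 v2 : 'I_N) : triangulation T -> [set v1;v2] \in T ->
  exists w, [/\ 0 < cyc v1 w, cyc v1 w < cyc v1 v2, side_or_in T v1 w & side_or_in T w v2].
Proof.
move=> hT hv.
have [a [b [ab nab E]]] := diag_of hT hv.
have [v12 nadj] : v1 != v2 /\ ~ adjacent v1 v2.
  by case/set2eq: E => [[-> ->]|[-> ->]]; split=> //; [rewrite eq_sym|rewrite adj_sym].
have c0 : cyc v1 v2 <> 0 by move/cyc_eq0 => E2; rewrite E2 eqxx in v12.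
have c1 : cyc v1 v2 <> 1 by move=> E1; apply: nadj; left.
have cl := cyc_lt v1 v2.
have [w0 hw0] : exists w0 : 'I_N, cyc v1 w0 = 1 by apply: pos_surj; lia.
pose P := fun w => (0 < cyc v1 w < cyc v1 v2) && sob T v1 w.
have Pw0 : P w0 by rewrite /P hw0 /sob hw0 eqxx /=; lia.
case: (arg_maxnP (fun w => cyc v1 w) Pw0) => w /andP[/andP[w1 w2] sw] Hmax.
exists w; split=> //; first by apply/sobP.
apply/sobP; case: (boolP (sob T w v2)) => // nsw; exfalso.
move: nsw; rewrite /sob !negb_or => /and3P[n1 n2 n3].
have wv2 : w != v2 by apply/eqP => E2; rewrite E2 in w2; lia.
have dg : is_diag [set w; v2].
  exists w, v2; split=> //; split=> //; rewrite /adjacent; move: n1 n2 => /eqP n1 /eqP n2; tauto.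
case: hT => [H1 [H2 H3]].
have [e eT ce] := H3 _ dg n3.
have [p [q [_ _ Ee]]] := diag_of (conj H1 (conj H2 H3)) eT.
subst e.
have nc1 := H2 _ _ eT hv.
have nc2 : ~ cross [set p;q] [set v1;w].
  move: sw; rewrite /sob => /or3P[/eqP h|/eqP h|h].
  - by rewrite cross_sym; apply: adj_ncross; left.
  - by rewrite cross_sym; apply: adj_ncross; right.
  - exact: H2.
have c1' := proj1 (cross_o v1 w v2 p q) ce.
have c2' := fun h => nc1 (proj2 (cross_o v1 p q v1 v2) h).
have c3' := fun h => nc2 (proj2 (cross_o v1 p q v1 w) h).
rewrite cyc0 in c2' c3'.
rewrite ileave_sym ileave0 in c2'; rewrite ileave_sym ileave0 in c3'.
have [[hp hq]|[hp hq]] := ar1 w1 w2 c1' c2' c3'; clear c1' c2' c3'.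
- have hp' := cyc_eq0 hp; subst p.
  have : P q by rewrite /P /sob eT !orbT andbT; clear -w1 hq; lia.
  by move/Hmax; clear -hq; lia.
- have hq' := cyc_eq0 hp; subst q.
  have : P p by rewrite /P /sob setUC eT !orbT andbT; clear -w1 hq; lia.
  by move/Hmax; clear -hq; lia.
Qed.

Lemma sideT T (x y c f : 'I_N) : side_or_in T x y -> cross [set x;y] [set c;f] -> [set x;y] \in T.
Proof. by case=> // /adj_ncross H /H. Qed.

Lemma side_sym T (x y : 'I_N) : side_or_in T x y -> side_or_in T y x.
Proof. by case=> [/adj_sym|]; [left|right; rewrite setUC]. Qed.

Lemma cyc_sub (o w x : 'I_N) : cyc o w <= cyc o x -> cyc w x = cyc o x - cyc o w.
Proof. by move=> h; rewrite (cycB o) h. Qed.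

Lemma cyc_neq (o x y : 'I_N) : cyc o x <> cyc o y -> x != y.
Proof. by move=> h; apply/eqP => E; apply: h; rewrite E. Qed.

Lemma SuppE T (al d : {set 'I_N}) : (d \in Supp T al) = (d \in T) && cross d al.
Proof. by rewrite inE. Qed.

Lemma descend T (al al' : {set 'I_N}) : triangulation T ->
  (forall j i, j \in Supp T al :\: Supp T al' -> i \in Supp T al :&: Supp T al' -> ~ arrow T j i) ->
  (forall j i, j \in Supp T al :&: Supp T al' -> i \in Supp T al' :\: Supp T al -> ~ arrow T j i) ->
  forall m (v1 v2 a b a' b' : 'I_N), cyc v1 v2 <= m -> [set v1;v2] \in T ->
  al = [set a;b] -> al' = [set a';b'] ->
  0 < cyc v1 a' -> cyc v1 a' < cyc v1 a -> cyc v1 a < cyc v1 v2 -> cyc v1 v2 < cyc v1 b ->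
  cyc v1 v2 < cyc v1 b' -> False.
Proof.
move=> hT NA1 NA2 m; elim: m => [|m IH] v1 v2 a b a' b' hm hv Ea Ea' h1 h2 h3 h4 h5; first lia.
have lb := cyc_lt v1 b; have lb' := cyc_lt v1 b'.
have [w [w1 w2 s1 s2]] := tri_ex hT hv.
have iS : [set v1; v2] \in Supp T al by rewrite SuppE hv Ea /=; apply/(cross_o v1); rewrite cyc0 /ileave; lia.
have iS' : [set v1; v2] \in Supp T al' by rewrite SuppE hv Ea' /=; apply/(cross_o v1); rewrite cyc0 /ileave; lia.
case: (ltnP (cyc v1 w) (cyc v1 a')) => wa'.
-
  have c1 : cross [set w; v2] [set a; b] by apply/(cross_o v1); rewrite /ileave; lia.
  have jT := sideT s2 c1.
  apply: (IH w v2 a b a' b') => //; rewrite ?(@cyc_sub v1 w) //; lia.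
case: (ltnP (cyc v1 w) (cyc v1 a)) => wa.
-
  have c1 : cross [set w; v2] [set a; b] by apply/(cross_o v1); rewrite /ileave; lia.
  have jT := sideT s2 c1.
  have nc : ~ cross [set w; v2] [set a'; b'] by move/(cross_o v1); rewrite /ileave; lia.
  apply: (NA1 [set w; v2] [set v1; v2]).
  + apply/setDP; split; first by rewrite SuppE jT Ea c1.
    by rewrite SuppE Ea'; apply/negP => /andP[_ /nc].
  + by apply/setIP; split.
  split; first exact: hv. split; first exact: jT. exists v2, v1, w; split; last first.
    split; first by rewrite setUC.
    split; first by rewrite setUC.
    rewrite !(cycB v1 v2) cyc0; case: ifP; case: ifP; lia.
  split; first by split; apply: (cyc_neq (o := v1)); rewrite ?cyc0; lia.
  split; [right; rewrite setUC // | exact: s1 | exact: side_sym].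
case: (ltngtP (cyc v1 w) (cyc v1 a)) => wa2; first lia.
-
  have c1 : cross [set v1; w] [set a; b] by apply/(cross_o v1); rewrite cyc0 /ileave; lia.
  have kT := sideT s1 c1.
  by apply: (IH v1 w a b a' b') => //; lia.
-
  have c1 : cross [set v1; w] [set a'; b'] by apply/(cross_o v1); rewrite cyc0 /ileave; lia.
  have kT := sideT s1 c1.
  have nc : ~ cross [set v1; w] [set a; b] by move/(cross_o v1); rewrite cyc0 /ileave; lia.
  apply: (NA2 [set v1; v2] [set v1; w]).
  + by apply/setIP; split.
  + apply/setDP; split; first by rewrite SuppE kT Ea' c1.
    by rewrite SuppE Ea; apply/negP => /andP[_ /nc].
  split; first exact: kT. split; first exact: hv. exists v1, w, v2; split; last first.
    split; first reflexivity. split; first reflexivity. exact: w2.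
  split; first by split; apply: (cyc_neq (o := v1)); rewrite ?cyc0; lia.
  split; [exact: s1 | exact: s2 | right; exact: hv].
Qed.
End S2.

Section S4.
Variable N : nat.
Lemma P1 Y Z U1 U2 : Y < Z -> ((0 < U1 < Y /\ Y < U2) \/ (0 < U2 < Y /\ Y < U1)) ->
  ((0 < U1 < Z /\ Z < U2) \/ (0 < U2 < Z /\ Z < U1)) -> (0<U1<Y /\ Z<U2) \/ (0<U2<Y /\ Z<U1).
Proof. lia. Qed.
Lemma P2 Y Z U1 U2 : Y < Z -> ((0 < U1 < Y /\ Y < U2) \/ (0 < U2 < Y /\ Y < U1)) ->
  ~ ((0 < U1 < Z /\ Z < U2) \/ (0 < U2 < Z /\ Z < U1)) -> (0<U1<Y /\ Y<U2<=Z) \/ (0<U2<Y /\ Y<U1<=Z).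
Proof. lia. Qed.
Lemma P3 Y Z U1 U2 : Y < Z -> ~ ((0 < U1 < Y /\ Y < U2) \/ (0 < U2 < Y /\ Y < U1)) ->
  ((0 < U1 < Z /\ Z < U2) \/ (0 < U2 < Z /\ Z < U1)) -> (Y<=U1<Z /\ Z<U2) \/ (Y<=U2<Z /\ Z<U1).
Proof. lia. Qed.

Lemma crx (x a c f : 'I_N) : cross [set x; a] [set c; f] ->
  (0 < cyc x c < cyc x a /\ cyc x a < cyc x f) \/ (0 < cyc x f < cyc x a /\ cyc x a < cyc x c).
Proof. by move/(cross_o x); rewrite cyc0 ileave0. Qed.

Lemma ncrx (x a c f : 'I_N) : ~ cross [set x; a] [set c; f] ->
  ~ ((0 < cyc x c < cyc x a /\ cyc x a < cyc x f) \/ (0 < cyc x f < cyc x a /\ cyc x a < cyc x c)).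
Proof. by move=> H; rewrite -ileave0 -(cyc0 x) => /(cross_o x). Qed.

Lemma ncrx' (x a c f : 'I_N) : ~ cross [set c; f] [set x; a] ->
  ~ ((0 < cyc x c < cyc x a /\ cyc x a < cyc x f) \/ (0 < cyc x f < cyc x a /\ cyc x a < cyc x c)).
Proof. by move=> H; apply: ncrx => /cross_sym. Qed.

Lemma rotF (o o' a b c d e : 'I_N) : cyc o a = cyc o b \/ cord (cyc o c) (cyc o d) (cyc o e) ->
  cyc o' a = cyc o' b \/ cord (cyc o' c) (cyc o' d) (cyc o' e).
Proof. by case=> [/(eq_rot o')|/(cord_rot o o')]; auto. Qed.

Lemma AtoB T (al al' : {set 'I_N}) (v1 v2 u1 u2 u1' u2' : 'I_N) : triangulation T ->
  [set v1; v2] \in T -> al = [set u1; u2] -> al' = [set u1'; u2'] ->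
  0 < cyc v1 u1 -> cyc v1 u1 <= cyc v1 u1' -> cyc v1 u1' < cyc v1 v2 -> cyc v1 v2 < cyc v1 u2 ->
  cyc v1 u2 <= cyc v1 u2' ->
  (forall j i, j \in Supp T al :\: Supp T al' -> i \in Supp T al :&: Supp T al' -> ~ arrow T j i) /\
  (forall j i, j \in Supp T al :&: Supp T al' -> i \in Supp T al' :\: Supp T al -> ~ arrow T j i).
Proof.
move=> hT iT Ea Ea' p1 p2 p3 p4 p5.
have lvu2' := cyc_lt v1 u2'.
have F1 : cyc v1 u2 = cyc v1 u2' \/ cord (cyc v1 u1) (cyc v1 u2) (cyc v1 u2') by rewrite /cord; lia.
have F2 : cyc v1 u1 = cyc v1 u1' \/ cord (cyc v1 u1) (cyc v1 u1') (cyc v1 u2) by rewrite /cord; lia.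
have F5 : cyc v1 u1 = cyc v1 u1' \/ cord (cyc v1 u1) (cyc v1 u1') (cyc v1 u2') by rewrite /cord; lia.
have F3 : cord (cyc v1 u2') (cyc v1 v1) (cyc v1 u1) by rewrite cyc0 /cord; lia.
have F4 : cord (cyc v1 u1') (cyc v1 v2) (cyc v1 u2) by rewrite /cord; lia.
clear p1 p2 p3 p4 p5.
split.
- move=> j k /setDP[jS jS'] /setIP[kS kS'] [kT [jT [x [y [z [[[xy yz xz] _] [Ek [Ej lt]]]]]]]].
  subst j k.
  have c1 : cross [set x;z] [set u1;u2].
    move: jS; rewrite SuppE Ea; case/andP => _ H; exact: H.
  have nc2 : ~ cross [set x;z] [set u1';u2'] by move=> C; move: jS'; rewrite SuppE Ea' jT C.
  have c3 : cross [set x;y] [set u1;u2].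
    move: kS; rewrite SuppE Ea; case/andP => _ H; exact: H.
  have c4 : cross [set x;y] [set u1';u2'] .
    move: kS'; rewrite SuppE Ea'; case/andP => _ H; exact: H.
  have {}c1 := crx c1; have {}nc2 := ncrx nc2; have {}c3 := crx c3; have {}c4 := crx c4.
  have n1 := ncrx' (ncrossT hT iT kT); have n2 := ncrx' (ncrossT hT iT jT).
  have y0 : cyc x y <> 0 by move/cyc_eq0 => E; rewrite E eqxx in xy.
  have G1 := rotF x F1; have G2 := rotF x F2.
  have G3 := proj1 (cord_rot v1 x _ _ _) F3; have G4 := proj1 (cord_rot v1 x _ _ _) F4.
  have lz := cyc_lt x z; have lu1 := cyc_lt x u1; have lu2 := cyc_lt x u2;
  have lu1' := cyc_lt x u1'; have lv1 := cyc_lt x v1; have lv2 := cyc_lt x v2.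
  have [[q1 q2]|[q1 q2]] := P1 lt c3 c1; have [[r1 r2]|[r1 r2]] := P2 lt c4 nc2;
  clear c1 nc2 c3 c4 F1 F2 F3 F4 F5.
  + clear G2 G3 G4 n1 n2; rewrite /cord in G1; lia.
  + clear G2 n2; rewrite /cord in G1 G3 G4; lia.
  + clear G1 n2; rewrite /cord in G2 G3 G4; lia.
  + clear G1 G3 G4 n1 n2; rewrite /cord in G2; lia.
- move=> j k /setIP[jS jS'] /setDP[kS' kS] [kT [jT [x [y [z [[[xy yz xz] _] [Ek [Ej lt]]]]]]]].
  subst j k.
  have c1 : cross [set x;z] [set u1;u2].
    move: jS; rewrite SuppE Ea; case/andP => _ H; exact: H.
  have c2 : cross [set x;z] [set u1';u2'] .
    move: jS'; rewrite SuppE Ea'; case/andP => _ H; exact: H.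
  have nc3 : ~ cross [set x;y] [set u1;u2] by move=> C; move: kS; rewrite SuppE Ea kT C.
  have c4 : cross [set x;y] [set u1';u2'] .
    move: kS'; rewrite SuppE Ea'; case/andP => _ H; exact: H.
  have {}c1 := crx c1; have {}c2 := crx c2; have {}nc3 := ncrx nc3; have {}c4 := crx c4.
  have n1 := ncrx' (ncrossT hT iT kT); have n2 := ncrx' (ncrossT hT iT jT).
  have y0 : cyc x y <> 0 by move/cyc_eq0 => E; rewrite E eqxx in xy.
  have G1 := rotF x F1; have G2 := rotF x F2; have G5 := rotF x F5.
  have G3 := proj1 (cord_rot v1 x _ _ _) F3; have G4 := proj1 (cord_rot v1 x _ _ _) F4.
  have lz := cyc_lt x z; have lu1 := cyc_lt x u1; have lu2 := cyc_lt x u2;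
  have lu1' := cyc_lt x u1'; have lu2' := cyc_lt x u2'; have lv1 := cyc_lt x v1; have lv2 := cyc_lt x v2.
  have [[q1 q2]|[q1 q2]] := P3 lt nc3 c1; have [[r1 r2]|[r1 r2]] := P1 lt c4 c2;
  clear c1 c2 nc3 c4 F1 F2 F3 F4 F5.
  + clear G1 G3 G4 G5 n1 n2; rewrite /cord in G2; lia.
  + clear G1 G5 n1; rewrite /cord in G2 G3 G4; lia.
  + clear G1 G2 n1; rewrite /cord in G5 G3 G4; lia.
  + clear G2 G5 n1; rewrite /cord in G1 G3 G4; lia.
Qed.
End S4.

Lemma split_ends N (v1 v2 p q : 'I_N) : cross [set v1; v2] [set p; q] ->
  exists u1 u2, [/\ [set p; q] = [set u1; u2], 0 < cyc v1 u1, cyc v1 u1 < cyc v1 v2 & cyc v1 v2 < cyc v1 u2].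
Proof.
move/crx => [[/andP[h1 h2] h3]|[/andP[h1 h2] h3]].
- by exists p, q.
- by exists q, p; rewrite setUC.
Qed.

Lemma cyc_add N (o w x : 'I_N) : cyc o x < cyc o w -> cyc w x = cyc o x + N - cyc o w.
Proof. by move=> h; rewrite (cycB o) leqNgt h. Qed.

Theorem mainTheorem13 (n : nat) (T : {set {set 'I_(n.+3)}})
  (al al' : {set 'I_(n.+3)}) :
  triangulation T -> positive_root T al -> positive_root T al' ->
  let S := Supp T al in let S' := Supp T al' in
  (exists i, i \in S :&: S' /\
     exists v1 v2 u1 u2 u1' u2' : 'I_(n.+3),
       [/\ i = [set v1; v2], al = [set u1; u2], al' = [set u1'; u2'] &
           [/\ 0 < cyc v1 u1, cyc v1 u1 <= cyc v1 u1',
               cyc v1 u1' < cyc v1 v2, cyc v1 v2 < cyc v1 u2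
             & cyc v1 u2 <= cyc v1 u2']])
  <->
  [/\ S :&: S' != set0,
      (forall j i, j \in S :\: S' -> i \in S :&: S' -> ~ arrow T j i)
    & (forall j i, j \in S :&: S' -> i \in S' :\: S -> ~ arrow T j i)].
Proof.
move=> hT [[p [q [_ [_ Ea]]]] _] [[p' [q' [_ [_ Ea']]]] _] S S'.
split.
- case=> i [iI [v1 [v2 [u1 [u2 [u1' [u2' [Ei Eu Eu' [p1 p2 p3 p4 p5]]]]]]]]].
  have iT : i \in T.
    case/setIP: iI => + _; rewrite SuppE; case/andP => H _; exact: H.
  subst i.
  have [H1 H2] := AtoB hT iT Eu Eu' p1 p2 p3 p4 p5.
  split; [apply/set0Pn; exists [set v1; v2]; exact: iI | exact: H1 | exact: H2].
- case=> ne NA1 NA2.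
  have /set0Pn [i iI] := ne.
  have [iS iS'] := setIP iI.
  have iT : i \in T.
    move: iS; rewrite SuppE; case/andP => H _; exact: H.
  have [v1 [v2 [v12 _ Ei]]] := diag_of hT iT.
  have ca : cross [set v1; v2] [set p; q] by move: iS; rewrite SuppE Ei -Ea; case/andP => _ H; exact: H.
  have ca' : cross [set v1; v2] [set p'; q'] by move: iS'; rewrite SuppE Ei -Ea'; case/andP => _ H; exact: H.
  have [u1 [u2 [Eu h1 h2 h3]]] := split_ends ca.
  have [u1' [u2' [Eu' h1' h2' h3']]] := split_ends ca'.
  rewrite Eu in Ea; rewrite Eu' in Ea'.
  have lu2 := cyc_lt v1 u2; have lu2' := cyc_lt v1 u2'.
  subst i.
  case: (leqP (cyc v1 u1) (cyc v1 u1')) => c1; last first.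
    by exfalso; apply: (descend hT NA1 NA2 (leqnn _) iT Ea Ea' h1' c1 h2 h3 h3').
  case: (leqP (cyc v1 u2) (cyc v1 u2')) => c2.
    by exists [set v1; v2]; split=> //; exists v1, v2, u1, u2, u1', u2'; split.
  exfalso.
  have iT' : [set v2; v1] \in T by rewrite setUC.
  rewrite setUC in Ea; rewrite setUC in Ea'.
  have e2' : cyc v2 u2' = cyc v1 u2' - cyc v1 v2 := cyc_sub (ltnW h3').
  have e2 : cyc v2 u2 = cyc v1 u2 - cyc v1 v2 := cyc_sub (ltnW h3).
  have v0 : cyc v1 v1 < cyc v1 v2 by rewrite cyc0; exact: (leq_ltn_trans (leq0n _) (ltn_trans h1 h2)).
  have e0 : cyc v2 v1 = cyc v1 v1 + n.+3 - cyc v1 v2 := cyc_add v0.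
  have eu1 : cyc v2 u1 = cyc v1 u1 + n.+3 - cyc v1 v2 := cyc_add h2.
  have eu1' : cyc v2 u1' = cyc v1 u1' + n.+3 - cyc v1 v2 := cyc_add h2'.
  rewrite cyc0 in e0.
  apply: (descend hT NA1 NA2 (leqnn _) iT' Ea Ea');
  rewrite ?e0 ?e2 ?e2' ?eu1 ?eu1'; clear -h1 h2 h3 h1' h2' h3' c1 c2 lu2 lu2'; lia.
Qed.
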